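(* Let $G$ be a compact matrix quantum group with strong polynomial growth with respect to a length function $\ell$, and for $\Lambda\in\mathbb{N}$ let $A_\Lambda=\{\alpha\in\operatorname{Irred}(G):\ell(\alpha)\le\Lambda\}$. Then $(A_\Lambda)_{\Lambda\in\mathbb{N}}$ is a Følner sequence in the fusion algebra $F(G)$: for every finite nonempty $S\subseteq\operatorname{Irred}(G)$ and every $\varepsilon>0$ there is $\Lambda_0$ such that $\sum_{\xi\in\partial_S(A_\Lambda)}d(\xi)^2<\varepsilon\sum_{\xi\in A_\Lambda}d(\xi)^2$ for all $\Lambda\ge\Lambda_0$.
   Context: $\operatorname{Irred}(G)$ is a complete set of representatives of irreducible unitary corepresentations of $G$; $d(\alpha)$ is the dimension of $\alpha$, $e$ the trivial corepresentation, $\bar\alpha$ the conjugate. The fusion algebra $F(G)$ has basis $\operatorname{Irred}(G)$ with product $\alpha\beta=\sum_\gamma N^\gamma_{\alpha,\beta}\gamma$, $N^\gamma_{\alpha,\beta}$ the multiplicity of $\gamma$ in $\alpha\otimes\beta$; $\operatorname{supp}(\alpha\xi)=\{\gamma: N^\gamma_{\alpha,\xi}\ne0\}$. A length function $\ell:\operatorname{Irred}(G)\to[0,\infty)$ satisfies $\ell(e)=0$, $\ell(\bar\alpha)=\ell(\alpha)$, and $\ell(\gamma)\le\ell(\alpha)+\ell(\beta)$ whenever $N^\gamma_{\alpha,\beta}\ne0$. Strong polynomial growth w.r.t. $\ell$: there exist $c_1,c_2,s>0$ with $c_2n^s\le\sum_{\ell(\alpha)\in(n-1,n]}d(\alpha)^2\le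 c_1n^s$ for all $n\in\mathbb{N}$. For finite $S,F\subseteq\operatorname{Irred}(G)$ the boundary is $\partial_S(F)=\{\alpha\in F:\exists\xi\in S,\ \operatorname{supp}(\alpha\xi)\not\subseteq F\}\cup\{\alpha\in F^c:\exists\xi\in S,\ \operatorname{supp}(\alpha\xi)\not\subseteq F^c\}$, where $F^c=\operatorname{Irred}(G)\setminus F$. *)

(* Defs.v *)
From HB Require Import structures.
From mathcomp Require Import all_boot all_order all_algebra finmap.
From mathcomp Require Import all_classical all_reals all_analysis.
Set Implicit Arguments. Unset Strict Implicit. Unset Printing Implicit Defensive.
Import Order.TTheory GRing.Theory Num.Theory.
Local Open Scope classical_set_scope.
Local Open Scope ring_scope.

(* Fusion data of a compact quantum group G:
   I     = Irred(G) (a set of representatives of irreducible unitary corepresentations),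
   e     = trivial corepresentation,
   conj  = conjugate corepresentation  alpha |-> bar alpha,
   N g a b = N^g_{a,b}, multiplicity of g in a (x) b,
   d     = dimension. *)

Definition supp {I : Type} (N : I -> I -> I -> nat) (a x : I) : set I :=
  [set g | N g a x <> 0%N].

Inductive generated {I : Type} (e : I) (conj : I -> I) (N : I -> I -> I -> nat)
    (U : set I) : I -> Prop :=
| gen_e : generated e conj N U e
| gen_step a x g : generated e conj N U a -> (U x \/ U (conj x)) ->
    N g a x <> 0%N -> generated e conj N U g.

Definition cmqg_fusion {I : choiceType} (e : I) (conj : I -> I)
    (N : I -> I -> I -> nat) (d : I -> nat) : Prop :=
  [/\ (forall a, conj (conj a) = a) /\ conj e = e,
      d e = 1%N /\ (forall a, (0 < d a)%N),
      (forall a b, finite_set (supp N a b)) /\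
      (forall a b, ((d a * d b)%:R : int) = \sum_(g \in [set: I]) ((N g a b * d g)%:R : int)),
      (forall a g, N g e a = (g == a) :> nat /\ N g a e = (g == a) :> nat) /\
      (forall a b g, N g a b = N a g (conj b) /\ N g a b = N b (conj a) g) /\
      (forall a b c f,
          \sum_(x \in [set: I]) ((N x a b * N f x c)%:R : int)
        = \sum_(x \in [set: I]) ((N x b c * N f a x)%:R : int))
    & exists U : {fset I}, forall a, generated e conj N [set` U] a].

Definition length_function {I : Type} (R : realType) (e : I) (conj : I -> I)
    (N : I -> I -> I -> nat) (ell : I -> R) : Prop :=
  [/\ forall a, 0 <= ell a, ell e = 0, forall a, ell (conj a) = ell a
    & forall a b g, N g a b <> 0%N -> ell g <= ell a + ell b].

(* Strong polynomial growth w.r.t. ell (the shells { ell in (n-1,n] } being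
   finite, as forced by the finiteness of the sums). *)
Definition strong_poly_growth {I : choiceType} (R : realType) (d : I -> nat)
    (ell : I -> R) : Prop :=
  (forall n : nat, finite_set [set a | n%:R - 1 < ell a <= n%:R]) /\
  exists c1 c2 s : R, [/\ 0 < c1, 0 < c2, 0 < s &
    forall n : nat, (0 < n)%N ->
      c2 * (n%:R `^ s) <= \sum_(a \in [set a | n%:R - 1 < ell a <= n%:R]) ((d a)%:R : R) ^+ 2
      /\ \sum_(a \in [set a | n%:R - 1 < ell a <= n%:R]) ((d a)%:R : R) ^+ 2 <= c1 * (n%:R `^ s)].

Definition boundary {I : Type} (N : I -> I -> I -> nat) (S F : set I) : set I :=
  [set a | (F a /\ exists2 x, S x & ~ (supp N a x `<=` F))
        \/ (~ F a /\ exists2 x, S x & ~ (supp N a x `<=` ~` F))].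

Definition ball_len {I : Type} (R : realType) (ell : I -> R) (L : nat) : set I :=
  [set a | ell a <= L%:R].

(* Main.v *)
Require Import Defs.
From HB Require Import structures.
From mathcomp Require Import all_boot all_order all_algebra finmap.
From mathcomp Require Import all_classical all_reals all_analysis.
From mathcomp Require Import ring lra zify.
Import Order.TTheory GRing.Theory Num.Theory.
Local Open Scope classical_set_scope.
Local Open Scope ring_scope.

Set Implicit Arguments. Unset Strict Implicit. Unset Printing Implicit Defensive.
Lemma fsum_sub (I : choiceType) (R : realType) (A B : set I) (f : I -> R) :
  finite_set B -> A `<=` B -> (forall x, B x -> 0 <= f x) ->
  \sum_(x \in A) f x <= \sum_(x \in B) f x.
Proof.
move=> Bf AB f0; have Af : finite_set A := sub_finite_set AB Bf.
rewrite -[in leRHS](setDUK AB) fsbigU //; last first.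
- by move=> x [Ax []].
- exact: finite_setD.
rewrite lerDl; apply: fsumr_ge0 => x [Bx _]; exact: f0.
Qed.

Definition shell (I : Type) (R : realType) (ell : I -> R) (n : nat) : set I :=
  [set a | n%:R - 1 < ell a <= n%:R].

Definition ush (I : Type) (R : realType) (ell : I -> R) (a k : nat) : set I :=
  [set x | exists2 i, (i < k)%N & shell ell (a + i) x].

Lemma shell_exists (R : realType) (L : nat) (r : R) : 0 <= r -> r <= L%:R ->
  exists n, (n <= L)%N /\ n%:R - 1 < r <= n%:R.
Proof.
move=> r0; elim: L => [|L IH] hr.
  by exists 0%N; split => //; apply/andP; split => //; lra.
case: (lerP r L%:R) => hL.
  by have [n [hn H]] := IH hL; exists n; split => //; apply: leq_trans hn _.
exists L.+1; split => //; apply/andP; split => //; rewrite -natr1; lra.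
Qed.

Lemma ush_sum (I : choiceType) (R : realType) (ell : I -> R) (f : I -> R) :
  (forall n, finite_set (shell ell n)) -> forall a k,
  finite_set (ush ell a k) /\
  \sum_(x \in ush ell a k) f x = \sum_(i < k) \sum_(x \in shell ell (a + i)) f x.
Proof.
move=> Hfin a; elim => [|k [IHf IHs]].
  have -> : ush ell a 0 = set0 by apply/seteqP; split=> x //= [i].
  by rewrite fsbig_set0 big_ord0.
have E : ush ell a k.+1 = ush ell a k `|` shell ell (a + k).
  apply/seteqP; split => x /=.
    move=> [i hi hx]; rewrite ltnS leq_eqVlt in hi; case/orP: hi => [/eqP Ei|hi].
      rewrite Ei in hx.
      by right.
    by left; exists i.
  by case=> [[i hi hx]|hx]; [exists i => //; apply: ltnW|exists k].
rewrite E; split; first by rewrite finite_setU; split.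
rewrite fsbigU //; last first.
  move=> x [[i hi /andP [h1 h2]] /andP [h3 h4]]; exfalso.
  have : ((a + i).+1)%:R <= (a + k)%:R :> R by rewrite ler_nat; lia.
  rewrite -natr1; lra.
by rewrite IHs big_ord_recr.
Qed.

Unset Implicit Arguments.
Theorem proposition3p5 (I : choiceType) (e : I) (conj : I -> I)
    (N : I -> I -> I -> nat) (d : I -> nat)
    (HG : cmqg_fusion e conj N d)
    (R : realType) (ell : I -> R)
    (Hell : length_function e conj N ell)
    (Hgrowth : strong_poly_growth d ell) :
  forall (S : {fset I}), S != fset0 ->
  forall eps : R, 0 < eps ->
  exists L0 : nat, forall L : nat, (L0 <= L)%N ->
    \sum_(x \in boundary N [set` S] (ball_len ell L)) ((d x)%:R : R) ^+ 2
      < eps * \sum_(x \in ball_len ell L) ((d x)%:R : R) ^+ 2.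
Proof.
move=> S _ eps eps0.
case: HG => _ _ _ [_ [Hfrob _]] _.
case: Hell => ell0 _ ellconj elltri.
case: Hgrowth => Hfin [c1 [c2 [s [c10 c20 s0 Hb]]]].
pose f := fun x => ((d x)%:R : R) ^+ 2.
have f0 : forall x, 0 <= f x by move=> x; rewrite /f sqr_ge0.
set M := (\max_(xi <- S) Num.bound (ell xi))%N.
have HM : forall xi, xi \in S -> ell xi <= M%:R.
  move=> xi Sxi; apply: le_trans (ltW (archi_boundP (ell0 xi))) _.
  rewrite ler_nat; exact: (@leq_bigmax_seq _ _ xpredT (fun xi => Num.bound (ell xi)) _ Sxi).
set C := (4%:R : R) `^ s.
have C0 : 0 < C by apply: powR_gt0.
set T := 2 * M%:R * c1 * C / (eps * c2).
have T0 : 0 <= T by rewrite /T; apply: divr_ge0; apply: mulr_ge0 => //;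
  do ?apply: mulr_ge0 => //; exact: ltW.
set K := Num.bound T.
have HK : T < K%:R := archi_boundP T0.
exists (2 * K + 2 * M + 4)%N => L HL.
set k := (L %/ 2)%N.
have hk1 : (K + M + 2 <= k)%N by rewrite /k; lia.
have hk2 : (L + M <= 4 * k)%N by rewrite /k; lia.
have hk3 : (k <= L + 1 - k)%N by rewrite /k; lia.
have hk4 : (M + 2 <= L)%N by lia.
set X := (k%:R : R) `^ s.
have X0 : 0 < X by apply: powR_gt0; rewrite ltr0n; lia.
have Hfin' : forall n, finite_set (shell ell n) := Hfin.
have Hlow : (c2 * X) *+ (L + 1 - k) <= \sum_(x \in ball_len ell L) f x.
  have [Ufin Usum] := ush_sum f Hfin' k (L + 1 - k).
  have [U0fin _] := ush_sum f Hfin' 0 (L + 1).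
  have Bfin : finite_set (ball_len ell L).
    apply: sub_finite_set U0fin => x /= hx.
    have [n [hn /andP[h1 h2]]] := shell_exists (ell0 x) hx.
    by exists n; [lia | rewrite add0n /shell /=; apply/andP; split].
  have Hsub : ush ell k (L + 1 - k) `<=` ball_len ell L.
    move=> x [i hi /andP[_ h2]]; rewrite /ball_len /=; apply: (le_trans h2).
    by rewrite ler_nat; lia.
  apply: (le_trans _ (fsum_sub Bfin Hsub (fun x _ => f0 x))).
  have -> : (c2 * X) *+ (L + 1 - k) = \sum_(i < L + 1 - k) (c2 * X).
    by rewrite sumr_const card_ord.
  rewrite Usum; apply: ler_sum => i _.
  have [h _] := Hb (k + i)%N ltac:(lia).
  apply: le_trans h; rewrite ler_pM2l //; apply: ge0_ler_powR => //; first exact: ltW.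
  - by rewrite nnegrE.
  - by rewrite nnegrE.
  - by rewrite ler_nat leq_addr.
have Hup : \sum_(x \in boundary N [set` S] (ball_len ell L)) f x
    <= (c1 * (C * X)) *+ (2 * M).
  have [Ufin Usum] := ush_sum f Hfin' (L - M + 1) (2 * M).
  have Hsub : boundary N [set` S] (ball_len ell L) `<=` ush ell (L - M + 1) (2 * M).
    move=> x Hx.
    have [hlo hhi] : L%:R - M%:R < ell x /\ ell x <= (L + M)%:R.
      case: Hx => [[hx [xi Sxi Hns]]|[hx [xi Sxi Hns]]].
        have [g [Hg1 Hg2]] : exists g, supp N x xi g /\ ~ ball_len ell L g.
          apply: contrapT => H; apply: Hns => g Ag; apply: contrapT => nB.
          by apply: H; exists g.
        have := elltri _ _ _ Hg1; have := HM xi Sxi.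
        rewrite /ball_len /= in hx Hg2; move/negP: Hg2; rewrite -ltNge => Hg2.
        have := ler0n R M; rewrite natrD => *; split; lra.
      have [g [Hg1 Hg2]] : exists g, supp N x xi g /\ ball_len ell L g.
        apply: contrapT => H; apply: Hns => g Ag; move=> nB.
        by apply: H; exists g.
      have Hg1' : N x g (conj xi) <> 0%N by rewrite -(Hfrob x xi g).1.
      have := elltri _ _ _ Hg1'; have := HM xi Sxi; rewrite ellconj.
      rewrite /ball_len /= in hx Hg2; move/negP: hx; rewrite -ltNge => hx.
      have := ler0n R M; rewrite natrD => *; split; lra.
    have [n [hn /andP[h1 h2]]] := shell_exists (ell0 x) hhi.
    have hn2 : (L - M < n)%N.
      have hML : (M <= L)%N by clear -hk4; lia.
      rewrite -(ltr_nat R) (natrB _ hML); lra.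
    exists (n - (L - M + 1))%N; first by clear -hn hn2; lia.
    rewrite /shell /=; have -> : (L - M + 1 + (n - (L - M + 1)))%N = n by clear -hn2; lia.
    by apply/andP; split.
  apply: (le_trans (fsum_sub Ufin Hsub (fun x _ => f0 x))).
  have -> : (c1 * (C * X)) *+ (2 * M) = \sum_(i < 2 * M) (c1 * (C * X)).
    by rewrite sumr_const card_ord.
  rewrite Usum; apply: ler_sum => i _.
  have hpos : (0 < L - M + 1 + i)%N by rewrite addn1 addSn.
  have hi : (L - M + 1 + i <= 4 * k)%N by have := ltn_ord i; clear -hk2 hk4; lia.
  have [_ h] := Hb (L - M + 1 + i)%N hpos.
  apply: (le_trans h); rewrite ler_pM2l // /C /X -powRM ?ler0n //.
  apply: ge0_ler_powR => //; first exact: ltW.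
  - by rewrite nnegrE.
  - by rewrite nnegrE mulr_ge0.
  - by rewrite -natrM ler_nat.
change (\sum_(x \in boundary N [set` S] (ball_len ell L)) f x <
  eps * \sum_(x \in ball_len ell L) f x).
apply: (le_lt_trans Hup).
apply: (lt_le_trans _ (ler_wpM2l (ltW eps0) Hlow)).
rewrite -[_ *+ (2 * M)]mulr_natr -[_ *+ (L + 1 - k)]mulr_natr.
set A := ((L + 1 - k)%N%:R : R).
have hA : T < A.
  apply: lt_le_trans HK _; rewrite /A ler_nat.
  by clear -hk1 hk3; lia.
have ec0 : 0 < eps * c2 by apply: mulr_gt0.
have E : 2 * M%:R * c1 * C = T * (eps * c2).
  by rewrite /T divfK // gt_eqF.
have -> : c1 * (C * X) * (2 * M)%N%:R = X * (T * (eps * c2)).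
  by rewrite -E natrM; ring.
have -> : eps * (c2 * X * A) = X * (A * (eps * c2)) by ring.
by rewrite ltr_pM2l // ltr_pM2r.
Qed.
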